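(* Let $G$ be a graph that is both weakly $4$-choosable and $\{1,1,2\}$-choosable. If $L$ is an assignment of $G$ with $|L(v)|=4$ for all $v$ (colours being integers) and $\|L\|=3$, then $G$ has a proper colouring $f$ with $f(v)\in L(v)$ for all $v$.
   Context: $\|L\|=|\{L(x):x\in V(G)\}|$ is the number of distinct lists. A set $I$ of integers is symmetric if $i\in I$ implies $-i\in I$. $G$ is weakly $4$-choosable if it is $L$-colourable (has a proper colouring $f$ with $f(v)\in L(v)$) for every assignment $L$ in which each $L(v)$ is a symmetric set of $4$ integers. For a partition $\lambda=\{k_1,\dots,k_q\}$ of $k$, a $\lambda$-assignment of $G$ is an assignment $L$ with $|L(v)|=k$ for all $v$ such that $\bigcup_vL(v)$ can be partitioned into sets $C_1,\dots,C_q$ with $|L(v)\cap C_i|=k_i$ for all $v$ and $i$; $G$ is $\lambda$-choosable if it is $L$-colourable for every $\lambda$-assignment $L$. *)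

(* Defs.v *)
From mathcomp Require Import all_boot all_order all_algebra.
Set Implicit Arguments. Unset Strict Implicit. Unset Printing Implicit Defensive.
Import Order.TTheory GRing.Theory Num.Theory.

Definition simple_graph (V : finType) (e : rel V) : Prop :=
  symmetric e /\ irreflexive e.

(* A list assignment: each vertex gets a finite list of integer colours,
   represented as a duplicate-free sequence (the set is its support). *)
Definition assignment (V : finType) := V -> seq int.

Definition is_k_assignment (V : finType) (k : nat) (L : assignment V) : Prop :=
  forall v, uniq (L v) /\ size (L v) = k.

Definition L_colourable (V : finType) (e : rel V) (L : assignment V) : Prop :=
  exists f : V -> int, (forall v, f v \in L v) /\ (forall u v, e u v -> f u != f v).

(* ||L|| = number of distinct lists (as sets); sorting a duplicate-free
   sequence gives a canonical representative of the set. *)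
Definition num_lists (V : finType) (L : assignment V) : nat :=
  size (undup [seq sort <=%O (L v) | v <- enum V]).

Definition symmetric_set (s : seq int) : Prop :=
  forall i : int, i \in s -> (- i)%R \in s.

Definition weakly_4_choosable (V : finType) (e : rel V) : Prop :=
  forall L : assignment V,
    is_k_assignment 4 L -> (forall v, symmetric_set (L v)) -> L_colourable e L.

(* lambda-assignment for the partition lambda = (k_1,...,k_q) of k, given as
   a sequence of part sizes; the partition C_1..C_q of the union of the lists
   is encoded by a class function c (colours outside the union are irrelevant). *)
Definition lambda_assignment (V : finType) (lambda : seq nat) (L : assignment V) : Prop :=
  is_k_assignment (sumn lambda) L /\
  exists c : int -> nat,
    (forall v x, x \in L v -> c x < size lambda) /\
    forall v (i : nat), i < size lambda ->
      count (fun x => c x == i) (L v) = nth 0 lambda i.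

Definition lambda_choosable (V : finType) (e : rel V) (lambda : seq nat) : Prop :=
  forall L : assignment V, lambda_assignment lambda L -> L_colourable e L.

(* Main.v *)
Require Import Defs.
From mathcomp Require Import all_boot all_order all_algebra.
From mathcomp Require Import zify.
Set Implicit Arguments. Unset Strict Implicit. Unset Printing Implicit Defensive.
Import Order.TTheory GRing.Theory Num.Theory.

Definition pat3 := (bool * bool * bool)%type.
Definition TTT : pat3 := (true,true,true).
Definition TTF : pat3 := (true,true,false).
Definition TFT : pat3 := (true,false,true).
Definition FTT : pat3 := (false,true,true).
Definition TFF : pat3 := (true,false,false).
Definition FTF : pat3 := (false,true,false).
Definition FFT : pat3 := (false,false,true).
Definition FFF : pat3 := (false,false,false).
Definition pats : seq pat3 := [:: TTT; TTF; TFT; FTT; TFF; FTF; FFT; FFF].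

Definition types : seq (seq pat3) :=
  [:: [:: TTT]; [:: TTF; FFT]; [:: TFT; FTF]; [:: FTT; TFF]; [:: TFF; FTF; FFT]].
Definition kof (l : seq pat3) (P : pat3) : nat := P \in l.
Definition mk7 (t p q r a b c : nat) (P : pat3) : nat :=
  match P with
  | (true,true,true) => t | (true,true,false) => p | (true,false,true) => q
  | (false,true,true) => r | (true,false,false) => a | (false,true,false) => b
  | (false,false,true) => c | _ => 0 end.
Definition special (s : pat3 -> nat) :=
  [&& s TTT == 0, s TTF == 2, s TFT == 2, s FTT == 2, s TFF == 0, s FTF == 0 & s FFT == 0].
Definition fits (s : pat3 -> nat) l1 l2 := all (fun P => kof l1 P + kof l2 P <= s P) pats.
Definition good s := special s || has (fun l1 => has (fun l2 => fits s l1 l2) types) types.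

Lemma enum_good : all (fun t => all (fun p => all (fun q => all (fun r =>
  (p+q+t <= 4) ==> (p+r+t <= 4) ==> (q+r+t <= 4) ==>
   good (mk7 t p q r (4-(p+q+t)) (4-(p+r+t)) (4-(q+r+t)))) (iota 0 5)) (iota 0 5)) (iota 0 5)) (iota 0 5).
Proof. vm_compute. reflexivity. Qed.

Lemma core7 (s : pat3 -> nat) :
  s TTT + s TTF + s TFT + s TFF = 4 ->
  s TTT + s TTF + s FTT + s FTF = 4 ->
  s TTT + s TFT + s FTT + s FFT = 4 ->
  good (mk7 (s TTT) (s TTF) (s TFT) (s FTT) (s TFF) (s FTF) (s FFT)).
Proof.
move=> h1 h2 h3.
have ha : s TFF = 4 - (s TTF + s TFT + s TTT) by lia.
have hb : s FTF = 4 - (s TTF + s FTT + s TTT) by lia.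
have hc : s FFT = 4 - (s TFT + s FTT + s TTT) by lia.
rewrite ha hb hc.
have := enum_good.
move/allP/(_ (s TTT)); rewrite mem_iota => /(_ ltac:(lia)).
move/allP/(_ (s TTF)); rewrite mem_iota => /(_ ltac:(lia)).
move/allP/(_ (s TFT)); rewrite mem_iota => /(_ ltac:(lia)).
move/allP/(_ (s FTT)); rewrite mem_iota => /(_ ltac:(lia)).
move/implyP/(_ ltac:(lia))/implyP/(_ ltac:(lia))/implyP/(_ ltac:(lia)).
done.
Qed.

Lemma mk7_s (s : pat3 -> nat) P : P != FFF ->
  mk7 (s TTT) (s TTF) (s TFT) (s FTT) (s TFF) (s FTF) (s FFT) P = s P.
Proof. by case: P => [[[] []] []]. Qed.

Lemma types_trans l : l \in types ->
  [/\ \sum_(P <- pats | P.1.1) kof l P = 1,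
      \sum_(P <- pats | P.1.2) kof l P = 1 &
      \sum_(P <- pats | P.2) kof l P = 1].
Proof.
rewrite !inE; do ![move/orP => [/eqP -> | ]]; try move/eqP ->;
rewrite /pats !big_cons !big_nil /=; by split.
Qed.


Section Reg.
Variables A B C : seq int.
Definition patof (x : int) : pat3 := (x \in A, x \in B, x \in C).
Definition UU := undup (A ++ B ++ C).
Definition region (P : pat3) := [seq x <- UU | patof x == P].

Lemma region_uniq P : uniq (region P).
Proof. by rewrite filter_uniq // undup_uniq. Qed.

Lemma in_region x : x \in A ++ B ++ C -> x \in region (patof x).
Proof. by move=> h; rewrite mem_filter eqxx mem_undup. Qed.

Lemma region_pat x P : x \in region P -> patof x = P.
Proof. by rewrite mem_filter => /andP[/eqP]. Qed.

Lemma pat_partition (r : pred int) U :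
  count r U = \sum_(P <- pats) count (fun x => r x && (patof x == P)) U.
Proof.
elim: U => [|x U IH] /=; first by rewrite big1.
rewrite big_split /= -IH; congr (_ + _).
case: (patof x) => [[a b] c].
by case: a; case: b; case: c; rewrite /pats !big_cons !big_nil /=; case: (r x).
Qed.

Lemma decomp (M : seq int) (sel : pat3 -> bool) (q : pred int) :
  uniq M -> (forall x, (x \in M) = sel (patof x)) -> {subset M <= A ++ B ++ C} ->
  count q M = \sum_(P <- pats | sel P) count q (region P).
Proof.
move=> uM hM sM.
have pe : perm_eq M [seq x <- UU | x \in M].
  apply: uniq_perm => //; first by rewrite filter_uniq // undup_uniq.
  move=> x; rewrite mem_filter mem_undup; case xM: (x \in M) => //=.
  by rewrite sM.
rewrite (permP pe) count_filter pat_partition [RHS]big_mkcond /=.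
apply: eq_bigr => P _.
rewrite /region count_filter.
case sP: (sel P).
  apply: eq_count => x /=; rewrite hM.
  by case: eqP => [->|_]; rewrite ?sP ?andbF ?andbT.
rewrite -(count_pred0 UU); apply: eq_count => x /=; rewrite hM.
by case: eqP => [->|_]; rewrite ?sP ?andbF.
Qed.

Lemma idx_count (s : seq int) (h : pred nat) : uniq s ->
  count (fun x => h (index x s)) s = count h (iota 0 (size s)).
Proof.
move=> us.
have e : s = map (nth (0:int) s) (iota 0 (size s)) by rewrite -/(mkseq _ _) mkseq_nth.
rewrite [in LHS]e count_map; apply: eq_in_count => i; rewrite mem_iota => /andP[_ lt].
by rewrite /preim /= -e index_uniq.
Qed.
End Reg.

Definition gg (k1 k2 j : nat) : nat := if j < k1 then 0 else if j < k1 + k2 then 1 else 2.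

Lemma gg_count k1 k2 n i : k1 + k2 <= n ->
  count (fun j => gg k1 k2 j == i) (iota 0 n) =
  if i == 0 then k1 else if i == 1 then k2 else if i == 2 then n - k1 - k2 else 0.
Proof.
move=> le.
have -> : n = k1 + (k2 + (n - k1 - k2)) by lia.
rewrite !iotaD !count_cat add0n.
have c1 : count (fun j => gg k1 k2 j == i) (iota 0 k1) = (i == 0) * k1.
  rewrite (@eq_in_count _ _ (fun _ => i == 0)); last first.
    by move=> j; rewrite mem_iota /gg => /andP[_ ->]; rewrite eq_sym.
  by case: (i == 0); rewrite ?count_predT ?count_pred0 ?size_iota ?mul1n.
have c2 : count (fun j => gg k1 k2 j == i) (iota k1 k2) = (i == 1) * k2.
  rewrite (@eq_in_count _ _ (fun _ => i == 1)); last first.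
    move=> j; rewrite mem_iota /gg => /andP[a b].
    by rewrite ltnNge a /= b eq_sym.
  by case: (i == 1); rewrite ?count_predT ?count_pred0 ?size_iota ?mul1n.
have c3 : count (fun j => gg k1 k2 j == i) (iota (k1 + k2) (n - k1 - k2)) = (i == 2) * (n - k1 - k2).
  rewrite (@eq_in_count _ _ (fun _ => i == 2)); last first.
    move=> j; rewrite mem_iota /gg => /andP[a b].
    by rewrite ltnNge (leq_trans (leq_addr _ _) a) /= ltnNge a /= eq_sym.
  by case: (i == 2); rewrite ?count_predT ?count_pred0 ?size_iota ?mul1n.
have -> : k1 + (k2 + (n - k1 - k2)) - k1 - k2 = n - k1 - k2 by lia.
rewrite c1 c2 c3; clear c1 c2 c3.
by case: i => [|[|[|i]]] /=; lia.
Qed.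


Definition code (P : pat3) : int := if P == TTF then 1%R else if P == TFT then 2%R else 3%R.
Definition sgn2 (j : nat) (z : int) : int := if j == 0 then z else (- z)%R.

Lemma code_claim (P Q : pat3) (j k : nat) : P \in [:: TTF; TFT; FTT] -> Q \in [:: TTF; TFT; FTT] ->
  j < 2 -> k < 2 -> sgn2 j (code P) = sgn2 k (code Q) -> P = Q /\ j = k.
Proof.
rewrite !inE => /or3P[]/eqP-> /or3P[]/eqP->; case: j => [|[|j]] //; case: k => [|[|k]] //=.
all: rewrite /sgn2 /code /=; by move=> _ _ /eqP.
Qed.

Section Main.
Variables A B C : seq int.
Notation U := (A ++ B ++ C).
Notation R := (region A B C).
Notation pt := (patof A B C).

Definition cc (l1 l2 : seq pat3) (x : int) : nat :=
  gg (kof l1 (pt x)) (kof l2 (pt x)) (index x (R (pt x))).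

Lemma lists_ok l1 l2 (sel : pat3 -> bool) M i :
  uniq M -> (forall x, (x \in M) = sel (pt x)) -> {subset M <= U} -> size M = 4 ->
  \sum_(P <- pats | sel P) kof l1 P = 1 -> \sum_(P <- pats | sel P) kof l2 P = 1 ->
  (forall P, sel P -> kof l1 P + kof l2 P <= size (R P)) -> i < 3 ->
  count (fun x => cc l1 l2 x == i) M = nth 0 [:: 1; 1; 2] i.
Proof.
move=> uM hM sM szM h1 h2 hfit hi.
have step : forall i P, sel P -> count (fun x => cc l1 l2 x == i) (R P) =
   if i == 0 then kof l1 P else if i == 1 then kof l2 P else if i == 2 then
   size (R P) - kof l1 P - kof l2 P else 0.
  move=> i' P sP.
  rewrite (@eq_in_count _ _ (fun x => gg (kof l1 P) (kof l2 P) (index x (R P)) == i')); last first.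
    by move=> x /region_pat; rewrite /cc => ->.
  by rewrite (idx_count (fun j => gg (kof l1 P) (kof l2 P) j == i')) ?region_uniq // gg_count // hfit.
have hs : \sum_(P <- pats | sel P) size (R P) = 4.
  rewrite -szM -count_predT (decomp _ uM hM sM).
  by apply: eq_bigr => P _; rewrite count_predT.
rewrite (decomp _ uM hM sM).
rewrite (eq_bigr _ (step i)).
case: i hi => [|[|[|i]]] // _ /=.
have e : \sum_(P <- pats | sel P) size (R P) =
  \sum_(P <- pats | sel P) (size (R P) - kof l1 P - kof l2 P) +
  \sum_(P <- pats | sel P) kof l1 P + \sum_(P <- pats | sel P) kof l2 P.
  rewrite -!big_split; apply: eq_bigr => P sP /=; have := hfit P sP; lia.
lia.
Qed.
End Main.

Section Spec.
Variables A B C : seq int.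
Notation U := (A ++ B ++ C).
Notation R := (region A B C).
Notation pt := (patof A B C).
Hypothesis s0 : size (R (true,true,true)) = 0.
Hypothesis s1 : size (R (true,true,false)) = 2.
Hypothesis s2 : size (R (true,false,true)) = 2.
Hypothesis s3 : size (R (false,true,true)) = 2.
Hypothesis s4 : size (R (true,false,false)) = 0.
Hypothesis s5 : size (R (false,true,false)) = 0.
Hypothesis s6 : size (R (false,false,true)) = 0.

Definition phi (x : int) : int := sgn2 (index x (R (pt x))) (code (pt x)).

Lemma F1 x : x \in U -> size (R (pt x)) = 2 /\ pt x \in [:: TTF; TFT; FTT].
Proof.
move=> hx; have hr := in_region hx.
have hpos : 0 < size (R (pt x)) by case: (R (pt x)) hr.
move: hx hpos; rewrite !mem_cat /patof.
by case: (x \in A); case: (x \in B); case: (x \in C); rewrite ?s0 ?s1 ?s2 ?s3 ?s4 ?s5 ?s6.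
Qed.

Lemma idx_lt x : x \in U -> index x (R (pt x)) < 2.
Proof. move=> hx; have [<- _] := F1 hx; by rewrite index_mem in_region. Qed.

Lemma phi_inj : {in U &, injective phi}.
Proof.
move=> x y hx hy; rewrite /phi => e.
have [_ px] := F1 hx; have [_ py] := F1 hy.
have [ep ej] := code_claim px py (idx_lt hx) (idx_lt hy) e.
transitivity (nth 0%R (R (pt x)) (index x (R (pt x)))).
  by rewrite nth_index // in_region.
by rewrite ej ep nth_index // in_region.
Qed.

Lemma phi_sym (N : seq int) (sel : pat3 -> bool) :
  (forall x, (x \in N) = sel (pt x)) -> {subset N <= U} ->
  forall i, i \in map phi N -> (- i)%R \in map phi N.
Proof.
move=> hN sN i /mapP[x xN ->].
have hx := sN x xN.
have [sz px] := F1 hx.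
set P := pt x in sz px *.
set j := index x (R P).
have jlt : j < 2 by apply: idx_lt.
pose y := nth 0%R (R P) (1 - j).
have yR : y \in R P by rewrite mem_nth // sz; lia.
have py : pt y = P by apply: region_pat.
have jy : index y (R P) = 1 - j by rewrite index_uniq ?region_uniq // sz; lia.
apply/mapP; exists y.
  by rewrite hN py -/P -hN.
rewrite /phi py jy -/P -/j /sgn2.
by case: j jlt {jy y yR py} => [|[|]] //= _; rewrite ?opprK.
Qed.
End Spec.


Lemma three_reps (V : finType) (L : assignment V) : num_lists L = 3 ->
  exists vA vB vC, forall v, [\/ perm_eq (L v) (L vA), perm_eq (L v) (L vB) | perm_eq (L v) (L vC)].
Proof.
rewrite /num_lists.
have hin : forall v, sort <=%O (L v) \in undup [seq sort <=%O (L v) | v <- enum V].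
  by move=> v; rewrite mem_undup; apply/mapP; exists v; rewrite ?mem_enum.
have hex : forall a, a \in undup [seq sort <=%O (L v) | v <- enum V] -> exists w, a = sort <=%O (L w).
  by move=> a; rewrite mem_undup => /mapP[w _ ->]; exists w.
move: hin hex; case: (undup _) => [|a [|b [|c [|]]]] //= hin hex _.
have [vA ea] := hex a (mem_head _ _).
have [vB eb] := hex b ltac:(by rewrite !inE eqxx orbT).
have [vC ec] := hex c ltac:(by rewrite !inE eqxx !orbT).
exists vA, vB, vC => v.
have key : forall w, sort <=%O (L v) = sort <=%O (L w) -> perm_eq (L v) (L w).
  by move=> w e; rewrite -(perm_sort <=%O (L v)) e perm_sort.
move: (hin v); rewrite !inE => /or3P[/eqP e|/eqP e|/eqP e].
- by apply: Or31; apply: key; rewrite e ea.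
- by apply: Or32; apply: key; rewrite e eb.
- by apply: Or33; apply: key; rewrite e ec.
Qed.

Lemma mem_pats P : P \in pats.
Proof. by case: P => [[[] []] []]. Qed.

Definition selk (k : nat) (P : pat3) : bool :=
  if k == 0 then P.1.1 else if k == 1 then P.1.2 else P.2.

Lemma selk_sum l k : l \in types -> k < 3 -> \sum_(P <- pats | selk k P) kof l P = 1.
Proof. move=> /types_trans[a1 a2 a3]; by case: k => [|[|[|]]]. Qed.

Lemma selk_FFF k : selk k FFF = false.
Proof. by rewrite /selk; case: ifP => //; case: ifP. Qed.

Theorem theorem9 (V : finType) (e : rel V) :
  simple_graph e ->
  weakly_4_choosable e ->
  lambda_choosable e [:: 1%N; 1%N; 2%N] ->
  forall L : assignment V,
    is_k_assignment 4 L -> num_lists L = 3%N -> L_colourable e L.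
Proof.
move=> _ hW hL L HL hn.
have [vA [vB [vC hrep]]] := three_reps hn.
set A := L vA; set B := L vB; set C := L vC.
pose s := fun P => size (region A B C P).
have subU : forall x, (x \in A) || (x \in B) || (x \in C) -> x \in A ++ B ++ C.
  by move=> x; rewrite !mem_cat orbA.
have rep : forall v, exists2 k, k < 3 & forall x, (x \in L v) = selk k (patof A B C x).
  move=> v; case: (hrep v) => h.
  - by exists 0 => // x; rewrite (perm_mem h).
  - by exists 1 => // x; rewrite (perm_mem h).
  - by exists 2 => // x; rewrite (perm_mem h).
have subL : forall v, {subset L v <= A ++ B ++ C}.
  move=> v x; case: (hrep v) => h; rewrite (perm_mem h) => hx; apply: subU;
  by rewrite hx ?orbT.
have sumA : \sum_(P <- pats | P.1.1) s P = 4.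
  have [uA szA] := HL vA.
  rewrite -szA -count_predT (@decomp A B C _ (fun P => P.1.1) predT uA) //.
have sumB : \sum_(P <- pats | P.1.2) s P = 4.
  have [uB szB] := HL vB.
  rewrite -szB -count_predT (@decomp A B C _ (fun P => P.1.2) predT uB) //.
have sumC : \sum_(P <- pats | P.2) s P = 4.
  have [uC szC] := HL vC.
  rewrite -szC -count_predT (@decomp A B C _ (fun P => P.2) predT uC) //.
move: sumA sumB sumC; rewrite /pats !big_cons !big_nil /= => eA eB eC.
have := core7 (s := s) ltac:(lia) ltac:(lia) ltac:(lia).
case/orP.
-
  rewrite /special /= => /andP[/eqP h0 /andP[/eqP h1 /andP[/eqP h2 /andP[/eqP h3
    /andP[/eqP h4 /andP[/eqP h5 /eqP h6]]]]]].
  pose ph := phi A B C.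
  pose L' := fun v => map ph (L v).
  have HL' : is_k_assignment 4 L'.
    move=> v; have [u sz] := HL v; split; last by rewrite size_map.
    rewrite map_inj_in_uniq //.
    by move=> x y hx hy; apply: (phi_inj h0 h1 h2 h3 h4 h5 h6); apply: (subL v).
  have sym : forall v, symmetric_set (L' v).
    move=> v; have [k _ hk] := rep v.
    exact: (phi_sym h0 h1 h2 h3 h4 h5 h6 hk (subL v)).
  have [f' [hf1 hf2]] := hW L' HL' sym.
  have key : forall w, ph (nth 0%R (L w) (index (f' w) (L' w))) = f' w.
    move=> w; rewrite -(nth_map 0%R (ph 0%R)) ?nth_index //.
    by rewrite -(size_map ph) index_mem.
  exists (fun v => nth 0%R (L v) (index (f' v) (L' v))); split.
  + move=> v; rewrite mem_nth // -(size_map ph) index_mem; exact: hf1.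
  + move=> u v huv; have := hf2 u v huv; apply: contra => /eqP eq.
    by rewrite -key -[f' v]key eq.
- case/hasP => l1 l1T /hasP[l2 l2T hfit].
  apply: hL; split; first exact: HL.
  exists (cc A B C l1 l2); split.
  + by move=> v x _; rewrite /cc /gg; case: ifP => //; case: ifP.
  + move=> v i hi; have [k hk hmem] := rep v; have [u sz] := HL v.
    have fitP : forall P, selk k P -> kof l1 P + kof l2 P <= size (region A B C P).
      move=> P sP; move/allP: hfit => /(_ P (mem_pats P)).
      rewrite mk7_s //; apply/eqP => eP; move: sP; by rewrite eP selk_FFF.
    exact: (lists_ok u hmem (subL v) sz (selk_sum l1T hk) (selk_sum l2T hk) fitP hi).
Qed.
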